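(* Assume $\mathcal{T}$ is a tree, and either (a) $\mu_{ij}=\mu_j$ for all $(i,j)\in\mathcal{E}$ and $\theta_i=0$ for all $i$, or (b) $\mu_{ij}=\mu_i$ for all $(i,j)\in\mathcal{E}$ and $\theta_i=0$ for all $i$. Then there is a constant $m_2$ such that for all measurable locally bounded functions $w_i,y_i$ ($i\in\mathcal{I}$), $z_j$ ($j\in\mathcal{J}$), $\psi_{ij}$ (with $\psi_{ij}=0$ for $i\not\sim j$) on $[0,\infty)$ satisfying $$\sum_{j\in\mathcal{J}}\mathfrak{T}_{\mu_{ij}}\psi_{ij}=w_i-\mathfrak{T}_{\theta_i}y_i\ (i\in\mathcal{I}),\quad \sum_{i\in\mathcal{I}}\psi_{ij}=-z_j\ (j\in\mathcal{J}),\quad y_i\ge0,\ z_j\ge0,\quad \min(e\cdot y(t),e\cdot z(t))=0,$$ we have $\|y(t)\|+\|z(t)\|\le m_2(1+t)^{m_2}\|w\|_t^*$ for all $t\ge0$.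
   Context: $\mathcal{I}=\{1,\dots,I\}$, $\mathcal{J}=\{I+1,\dots,I+J\}$, $\mathcal{E}\subset\mathcal{I}\times\mathcal{J}$, $i\sim j$ iff $(i,j)\in\mathcal{E}$; $\mathcal{T}$ is the bipartite graph with vertices $\mathcal{I}\cup\mathcal{J}$ and edges $\mathcal{E}$. Constants $\mu_{ij}>0$ for $(i,j)\in\mathcal{E}$, $\mu_{ij}=0$ otherwise, $\theta_i\ge0$. $\mathfrak{J}f(t)=\int_0^tf(s)ds$, $\mathfrak{T}_\alpha f=f+\alpha\mathfrak{J}f$. $\|a\|=\sum|a_k|$, $\|w\|_t^*=\sup_{0\le s\le t}\|w(s)\|$, $e=(1,\dots,1)'$. The constant $m_2$ does not depend on $t,w,y,z,\psi$. *)

(* Defs.v *)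
From HB Require Import structures.
From mathcomp Require Import all_boot all_order all_algebra.
From mathcomp Require Import all_classical all_reals all_analysis.
Set Implicit Arguments. Unset Strict Implicit. Unset Printing Implicit Defensive.
Import Order.TTheory GRing.Theory Num.Theory.
Import numFieldNormedType.Exports.
Local Open Scope classical_set_scope.
Local Open Scope ring_scope.

(* Vertices of the bipartite graph T: I-side ('I_I) and J-side ('I_J). *)
Definition bip_adj (I J : nat) (E : 'I_I -> 'I_J -> bool) : rel ('I_I + 'I_J) :=
  fun u v => match u, v with
             | inl i, inr j => E i j
             | inr j, inl i => E i j
             | _, _ => false
             end.

Definition is_tree (I J : nat) (E : 'I_I -> 'I_J -> bool) : Prop :=
  (forall u v : 'I_I + 'I_J, connect (bip_adj E) u v) /\
  (forall s : seq ('I_I + 'I_J), uniq s -> (3 <= size s)%N -> ~~ cycle (bip_adj E) s).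

Definition Jint (R : realType) (f : R -> R) (t : R) : R :=
  Rintegral lebesgue_measure `[0, t] f.

Definition Top (R : realType) (a : R) (f : R -> R) (t : R) : R :=
  f t + a * Jint f t.

Definition meas_locbdd (R : realType) (f : R -> R) : Prop :=
  measurable_fun (`[0, +oo[ : set R) f /\
  (forall t : R, 0 <= t -> exists M : R, forall s : R, 0 <= s <= t -> `|f s| <= M).

Definition supnorm (R : realType) (n : nat) (w : 'I_n -> R -> R) (t : R) : R :=
  sup [set (\sum_(k < n) `|w k s|) | s in `[0, t]].

(* Main.v *)
Require Import Defs.
From HB Require Import structures.
From mathcomp Require Import all_boot all_order all_algebra.
From mathcomp Require Import all_classical all_reals all_analysis.
From mathcomp Require Import ring lra.
Import Order.TTheory GRing.Theory Num.Theory.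
Import numFieldNormedType.Exports.
Local Open Scope classical_set_scope.
Local Open Scope ring_scope.

Section H.
Set Implicit Arguments. Unset Strict Implicit.
Context {R : realType}.
Notation mu := (@lebesgue_measure R).

Lemma ml_int (f : R -> R) t : meas_locbdd f -> 0 <= t ->
  mu.-integrable `[0, t] (EFin \o f).
Proof.
move=> [mf bf] t0.
have [M hM] := bf t t0.
apply: measurable_bounded_integrable => //.
- have := lebesgue_measure_itv `[0, t]%R; rewrite /= => ->.
  by case: ifP => _; rewrite ?ltry.
- apply: measurable_funS mf => //= x; rewrite /= !in_itv /= => /andP[-> _].
  by [].
- exists M; split; first exact: num_real.
  move=> x Mx y; rewrite /= in_itv /= => /andP[y0 yt].
  by apply: le_trans (hM y _) (ltW Mx); rewrite y0 yt.
Qed.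

Lemma ml_ext (f g : R -> R) : meas_locbdd f -> (forall s, 0 <= s -> f s = g s) ->
  meas_locbdd g.
Proof.
move=> [mf bf] fg; split.
  apply: eq_measurable_fun mf => x; rewrite inE /= in_itv /= andbT => x0.
  exact: fg.
move=> t t0; have [M hM] := bf t t0; exists M => s /andP[s0 st].
by rewrite -fg // hM // s0 st.
Qed.

Lemma ml_cst (c : R) : meas_locbdd (fun _ => c).
Proof. by split; [exact: measurable_cst | move=> t _; exists `|c|]. Qed.

Lemma mlD (f g : R -> R) : meas_locbdd f -> meas_locbdd g ->
  meas_locbdd (fun s => f s + g s).
Proof.
move=> [mf bf] [mg bg]; split; first exact: measurable_realfun.measurable_funD.
move=> t t0; have [M hM] := bf t t0; have [N hN] := bg t t0.
exists (M + N) => s hs; apply: le_trans (ler_normD _ _) _.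
by apply: lerD; [exact: hM | exact: hN].
Qed.

Lemma mlZ (c : R) (f : R -> R) : meas_locbdd f -> meas_locbdd (fun s => c * f s).
Proof.
move=> [mf bf]; split.
  by apply: measurable_realfun.measurable_funM => //; exact: measurable_cst.
move=> t t0; have [M hM] := bf t t0.
exists (`|c| * M) => s hs; rewrite normrM; apply: ler_wpM2l => //; exact: hM.
Qed.

Lemma mlN (f : R -> R) : meas_locbdd f -> meas_locbdd (fun s => - f s).
Proof.
move=> hf; apply: (ml_ext (mlZ (-1) hf)) => s _ /=; by rewrite mulN1r.
Qed.

Lemma ml_sum (n : nat) (F : 'I_n -> R -> R) : (forall k, meas_locbdd (F k)) ->
  meas_locbdd (fun s => \sum_(k < n) F k s).
Proof.
move=> hF; elim: n F hF => [|n IH] F hF.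
  by apply: ml_ext _ _ (ml_cst 0) _ => s _; rewrite big_ord0.
apply: ml_ext _ _ (mlD (hF ord0) (IH (fun k => F (lift ord0 k)) (fun k => hF _))) _.
by move=> s _; rewrite big_ord_recl.
Qed.

Lemma Jext (f g : R -> R) t : (forall s, 0 <= s <= t -> f s = g s) ->
  Jint f t = Jint g t.
Proof.
move=> fg; rewrite /Jint; apply: eq_Rintegral => s; rewrite inE /= in_itv /=.
exact: fg.
Qed.

Lemma JD (f g : R -> R) t : meas_locbdd f -> meas_locbdd g -> 0 <= t ->
  Jint (fun s => f s + g s) t = Jint f t + Jint g t.
Proof. by move=> hf hg t0; rewrite /Jint RintegralD //; apply: ml_int. Qed.

Lemma JZ (c : R) (f : R -> R) t : meas_locbdd f -> 0 <= t ->
  Jint (fun s => c * f s) t = c * Jint f t.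
Proof. by move=> hf t0; rewrite /Jint RintegralZl //; apply: ml_int. Qed.

Lemma JN (f : R -> R) t : meas_locbdd f -> 0 <= t ->
  Jint (fun s => - f s) t = - Jint f t.
Proof.
move=> hf t0; rewrite -mulN1r -JZ //; apply: Jext => s _; by rewrite mulN1r.
Qed.

Lemma Jsum (n : nat) (F : 'I_n -> R -> R) t : (forall k, meas_locbdd (F k)) ->
  0 <= t -> Jint (fun s => \sum_(k < n) F k s) t = \sum_(k < n) Jint (F k) t.
Proof.
move=> hF t0; elim: n F hF => [|n IH] F hF.
  rewrite big_ord0 (Jext (g := fun s => 0 * 0)); last by move=> s _; rewrite big_ord0 mulr0.
  by rewrite JZ ?mul0r //; exact: ml_cst.
rewrite big_ord_recl -IH; last by move=> k; exact: hF.
rewrite -JD //; last exact: ml_sum.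
by apply: Jext => s _; rewrite big_ord_recl.
Qed.

Lemma Jle (f g : R -> R) t : meas_locbdd f -> meas_locbdd g -> 0 <= t ->
  (forall s, 0 <= s <= t -> f s <= g s) -> Jint f t <= Jint g t.
Proof.
move=> hf hg t0 fg; rewrite /Jint; apply: le_Rintegral => //; try exact: ml_int.
Qed.

Lemma Jcst (c : R) t : 0 <= t -> Jint (fun _ => c) t = c * t.
Proof.
move=> t0; rewrite /Jint Rintegral_cst //.
have := lebesgue_measure_itv `[0, t]%R; rewrite /= => ->.
move: t0; rewrite le_eqVlt => /predU1P[<-|tp]; first by rewrite ltxx /= !mulr0.
by rewrite lte_fin tp /= subr0.
Qed.

Lemma J0 (f : R -> R) : Jint f 0 = 0.
Proof. by rewrite /Jint set_itv1 Rintegral_set1. Qed.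

Lemma Jsplit (f : R -> R) (M s t : R) : meas_locbdd f -> 0 <= s -> s <= t ->
  (forall x, s < x <= t -> f x <= M) -> Jint f t - Jint f s <= M * (t - s).
Proof.
move=> hf s0 st fM; rewrite /Jint.
rewrite Rintegral_itvB //; last by apply: ml_int => //; exact: le_trans st.
apply: le_trans.
  apply: (le_Rintegral (f2 := fun _ => M)) => //.
  - apply: integrableS (ml_int hf (le_trans s0 st)) => //.
    by apply: subset_itvr; rewrite bnd_simp.
  - apply: measurable_bounded_integrable => //.
      have := lebesgue_measure_itv `]s, t]%R; rewrite /= => ->.
      by case: ifP => _; rewrite ?ltry.
    by exists `|M|; split; [exact: num_real | move=> x Mx y _; apply: ltW; apply: le_lt_trans Mx].
rewrite Rintegral_cst //.
have := lebesgue_measure_itv `]s, t]%R; rewrite /= => ->.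
move: st; rewrite le_eqVlt => /predU1P[<-|tp]; first by rewrite ltxx /= subrr !mulr0.
by rewrite lte_fin tp /=.
Qed.

Lemma supnorm_ub (n : nat) (w : 'I_n -> R -> R) T : (forall k, meas_locbdd (w k)) ->
  0 <= T -> forall s, 0 <= s <= T -> \sum_(k < n) `|w k s| <= supnorm w T.
Proof.
move=> hw T0 s hs; rewrite /supnorm; apply: sup_upper_bound; last first.
  by exists s => //; rewrite /= in_itv /=.
split; first by exists (\sum_(k < n) `|w k T|), T => //; rewrite /= in_itv /= T0 lexx.
exists (\sum_(k < n) projT1 (cid (proj2 (hw k) T T0))).
move=> y [x]; rewrite /= in_itv /= => hx <-.
apply: ler_sum => k _; case: cid => M /= hM; exact: hM.
Qed.

Lemma supnorm_ge0 (n : nat) (w : 'I_n -> R -> R) T : (forall k, meas_locbdd (w k)) ->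
  0 <= T -> 0 <= supnorm w T.
Proof.
move=> hw T0; apply: le_trans (supnorm_ub hw T0 (s := 0) _); last by rewrite lexx.
exact: sumr_ge0.
Qed.

Lemma compar (Psi : R -> R) (W T L : R) : 0 <= W -> 0 <= T -> meas_locbdd Psi ->
  (forall s, 0 <= s <= T -> `|Psi s| <= L) ->
  (forall s, 0 <= s <= T -> 0 <= Jint Psi s -> Psi s <= W) ->
  forall t0, 0 <= t0 <= T -> Jint Psi t0 <= t0 * W.
Proof.
move=> W0 T0 hP hL hW t0 /andP[t00 t0T].
have L0 : 0 <= L by apply: le_trans (hL 0 _); rewrite ?lexx.
pose S := [set s | 0 <= s <= t0 /\ Jint Psi s <= s * W].
have S0 : S 0 by split; rewrite ?lexx ?t00 // J0 mul0r.
have hS : has_sup S by split; [exists 0 | exists t0 => x [/andP[]]].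
set ss := sup S.
have ss0 : 0 <= ss by apply: sup_upper_bound.
have sst : ss <= t0 by apply: ge_sup; [exists 0 | move=> x [/andP[]]].
apply/ler_addgt0Pr => e e0.
have eL : 0 < e / (L + 1) by apply: divr_gt0 => //; rewrite ltr_wpDl.
have [s [/andP[s0 st0] hs] hss] := sup_adherent eL hS.
have sss : s <= ss by apply: (sup_upper_bound hS); split => //; rewrite s0 st0.
have h1 : Jint Psi t0 - Jint Psi ss <= W * (t0 - ss).
  apply: Jsplit => // x /andP[ssx xt0]; apply: hW.
    by rewrite (le_trans ss0 (ltW ssx)) (le_trans xt0 t0T).
  have : ~ S x by move=> Sx; move: ssx; rewrite ltNge sup_upper_bound.
  move=> nS; have : ~ (Jint Psi x <= x * W).
    by move=> h; apply: nS; split => //; rewrite (le_trans ss0 (ltW ssx)) xt0.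
  move/negP; rewrite -ltNge => /ltW; apply: le_trans.
  by apply: mulr_ge0 => //; exact: le_trans ss0 (ltW ssx).
have h2 : Jint Psi ss - Jint Psi s <= L * (ss - s).
  apply: Jsplit => // x /andP[sx xss].
  apply: le_trans (ler_norm _) (hL x _).
  by rewrite (le_trans s0 (ltW sx)) (le_trans xss (le_trans sst t0T)).
have h3 : L * (ss - s) <= e.
  apply: le_trans (_ : L * (e / (L + 1)) <= e).
    by apply: ler_wpM2l => //; rewrite lerBlDr addrC -lerBlDr ltW.
  rewrite mulrA ler_pdivrMr ?ltr_wpDl //; nra.
have h4 : W * (t0 - ss) + s * W <= t0 * W.
  have := ler_wpM2r W0 sss; lra.
lra.
Qed.

Lemma min0 (a b : R) : Num.min a b = 0 -> a = 0 \/ b = 0.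
Proof. by rewrite minElt; case: ifP => _ ->; [left|right]. Qed.

Lemma minsum (a b c : R) : 0 <= a -> 0 <= b -> Num.min a b = 0 -> a - b = c ->
  a + b = `|c|.
Proof.
move=> a0 b0 /min0 [->|->] <-.
  by rewrite add0r sub0r normrN ger0_norm.
by rewrite addr0 subr0 ger0_norm.
Qed.

Lemma finish (X C T W : R) : 0 <= C -> 0 <= T -> 0 <= W ->
  X <= C * (1 + T) ^+ 2 * W -> X <= (C + 2) * (1 + T) `^ (C + 2) * W.
Proof.
move=> C0 T0 W0 hX; apply: le_trans hX _.
have h1 : (1 + T) ^+ 2 <= (1 + T) `^ (C + 2).
  rewrite -powR_mulrn ?addr_ge0 //; apply: ler_powR; first by rewrite lerDl.
  by rewrite lerDr.
have h2 : 0 <= (1 + T) ^+ 2 by apply: exprn_ge0; rewrite addr_ge0.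
apply: ler_wpM2r => //; apply: le_trans (ler_wpM2l C0 h1) _.
by apply: ler_wpM2r; [exact: le_trans h1 | rewrite lerDl].
Qed.

Lemma sum_w_ge (n : nat) (w : 'I_n -> R -> R) s : - \sum_(k < n) `|w k s| <= \sum_(k < n) w k s.
Proof.
rewrite -sumrN; apply: ler_sum => k _; rewrite lerNl -normrN; exact: ler_norm.
Qed.

Lemma sum_w_le (n : nat) (w : 'I_n -> R -> R) s : \sum_(k < n) w k s <= \sum_(k < n) `|w k s|.
Proof. by apply: ler_sum => k _; exact: ler_norm. Qed.
End H.

Theorem proposition2 (R : realType) (I J : nat) (E : 'I_I -> 'I_J -> bool)
    (mu : 'I_I -> 'I_J -> R) (theta : 'I_I -> R) :
  (forall i j, E i j -> 0 < mu i j) ->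
  (forall i j, ~~ E i j -> mu i j = 0) ->
  (forall i, 0 <= theta i) ->
  is_tree E ->
  ((exists muJ : 'I_J -> R, (forall i j, E i j -> mu i j = muJ j) /\ (forall i, theta i = 0)) \/
   (exists muI : 'I_I -> R, (forall i j, E i j -> mu i j = muI i) /\ (forall i, theta i = 0))) ->
  exists m2 : R,
    forall (w y : 'I_I -> R -> R) (z : 'I_J -> R -> R) (psi : 'I_I -> 'I_J -> R -> R),
      (forall i, meas_locbdd (w i)) ->
      (forall i, meas_locbdd (y i)) ->
      (forall j, meas_locbdd (z j)) ->
      (forall i j, meas_locbdd (psi i j)) ->
      (forall i j, ~~ E i j -> forall s, 0 <= s -> psi i j s = 0) ->
      (forall i t, 0 <= t ->
         \sum_(j < J) Top (mu i j) (psi i j) t = w i t - Top (theta i) (y i) t) ->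
      (forall j t, 0 <= t -> \sum_(i < I) psi i j t = - z j t) ->
      (forall i t, 0 <= t -> 0 <= y i t) ->
      (forall j t, 0 <= t -> 0 <= z j t) ->
      (forall t, 0 <= t -> Num.min (\sum_(i < I) y i t) (\sum_(j < J) z j t) = 0) ->
      forall t, 0 <= t ->
        \sum_(i < I) `|y i t| + \sum_(j < J) `|z j t|
          <= m2 * (1 + t) `^ m2 * supnorm w t.
Proof.
move=> mupos mu0 th0 _ hcase.
case: hcase => [[muJ [hmuJ hth]] | [muI [hmuI hth]]].
- pose nu j := if [exists i, E i j] then muJ j else 0.
  have nu0 : forall j, 0 <= nu j.
    move=> j; rewrite /nu; case: existsP => [[i hi]|_] //.
    by rewrite -(hmuJ i j hi); exact: ltW (mupos i j hi).
  pose N := \sum_(j < J) nu j.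
  have N0 : 0 <= N by apply: sumr_ge0 => j _.
  exists (1 + N + 2).
  move=> w y z psi hw hy hz hpsi hpsi0 h1 h2 hy0 hz0 hmin T T0.
  have hWs := supnorm_ub hw T0. have W0 := supnorm_ge0 hw T0.
  set W := supnorm w T in hWs W0 *.
  have hJ0 : forall i j s, ~~ E i j -> 0 <= s -> Jint (psi i j) s = 0.
    move=> i j s hE s0; rewrite (Jext (g := fun _ => 0)) ?Jcst ?mul0r //.
    by move=> x /andP[x0 _]; exact: hpsi0.
  have hmu' : forall i j s, 0 <= s ->
      mu i j * Jint (psi i j) s = nu j * Jint (psi i j) s.
    move=> i j s s0; case hE: (E i j).
      rewrite /nu; case: existsP => [_|hn]; first by rewrite hmuJ.
      by exfalso; apply: hn; exists i.
    by rewrite hJ0 ?hE // !mulr0.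
  have key : forall s, 0 <= s -> \sum_i y i s - \sum_j z j s =
      \sum_i w i s + \sum_j nu j * Jint (z j) s.
    move=> s s0.
    have e1 : \sum_i (w i s - y i s) = \sum_i \sum_j Top (mu i j) (psi i j) s.
      by apply: eq_bigr => i _; rewrite h1 // /Top hth mul0r addr0.
    rewrite exchange_big /= in e1.
    have e2 : forall j, \sum_i Top (mu i j) (psi i j) s = - z j s - nu j * Jint (z j) s.
      move=> j; rewrite /Top big_split /= h2 //.
      under eq_bigr => i _ do rewrite hmu' //.
      rewrite -mulr_sumr -Jsum //.
      rewrite (Jext (g := fun x => - z j x)); last by move=> x /andP[x0 _]; rewrite h2.
      by rewrite JN // mulrN.
    rewrite (eq_bigr _ (fun j _ => e2 j)) sumrB sumrB in e1.
    have e4 : \sum_(j < J) - z j s = - \sum_(j < J) z j s by apply: sumrN.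
    lra.
  have Jz0 : forall j s, 0 <= s -> 0 <= Jint (z j) s.
    move=> j s s0; rewrite /Jint; apply: Rintegral_ge0 => x.
    by rewrite /= in_itv /= => /andP[x0 _]; exact: hz0.
  have zb : forall j s, 0 <= s <= T -> z j s <= W.
    move=> j s /andP[s0 sT].
    have zle : z j s <= \sum_j z j s.
      rewrite (bigD1 j) //= lerDl; apply: sumr_ge0 => k _; exact: hz0.
    apply: le_trans zle _.
    have ws := sum_w_ge w s. have wW := hWs s (introT andP (conj s0 sT)).
    have hnu : 0 <= \sum_j nu j * Jint (z j) s.
      by apply: sumr_ge0 => k _; apply: mulr_ge0 => //; exact: Jz0.
    have := key s s0.
    case: (min0 (hmin s s0)) => ->.
      lra.
    have : 0 <= \sum_i y i s by apply: sumr_ge0 => i _; exact: hy0.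
    lra.
  have JzT : forall j, Jint (z j) T <= T * W.
    move=> j; apply: le_trans (_ : Jint (fun _ => W) T <= _).
      apply: Jle => //; first exact: ml_cst.
      by move=> s hs; exact: zb.
    by rewrite Jcst // mulrC.
  rewrite -/W.
  have -> : \sum_i `|y i T| + \sum_j `|z j T| = `|\sum_i w i T + \sum_j nu j * Jint (z j) T|.
    rewrite (eq_bigr (fun i => y i T)); last by move=> i _; rewrite ger0_norm // hy0.
    rewrite [X in _ + X](eq_bigr (fun j => z j T)); last by move=> j _; rewrite ger0_norm // hz0.
    apply: minsum; [apply: sumr_ge0 => i _; exact: hy0 | apply: sumr_ge0 => j _; exact: hz0 | exact: hmin | exact: key].
  apply: finish => //; first by rewrite addr_ge0.
  have hnu : 0 <= \sum_j nu j * Jint (z j) T.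
    by apply: sumr_ge0 => k _; apply: mulr_ge0 => //; exact: Jz0.
  have hnu2 : \sum_j nu j * Jint (z j) T <= N * (T * W).
    rewrite /N mulr_suml; apply: ler_sum => j _; apply: ler_wpM2l => //.
  have hw1 := sum_w_ge w T. have hw2 := sum_w_le w T.
  have wW := hWs T (introT andP (conj T0 (lexx T))).
  apply: le_trans (ler_normD _ _) _.
  rewrite (ger0_norm hnu).
  have : `|\sum_i w i T| <= W by rewrite ler_norml; lra.
  have hTW : 0 <= T * W by apply: mulr_ge0.
  nra.
- pose nu i := if [exists j, E i j] then muI i else 0.
  have nu0 : forall i, 0 <= nu i.
    move=> i; rewrite /nu; case: existsP => [[j hj]|_] //.
    by rewrite -(hmuI i j hj); exact: ltW (mupos i j hj).
  pose N := \sum_(i < I) nu i.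
  have N0 : 0 <= N by apply: sumr_ge0 => i _.
  pose C := 1 + N * (2 + I%:R) + N ^+ 2.
  exists (C + 2).
  move=> w y z psi hw hy hz hpsi hpsi0 h1 h2 hy0 hz0 hmin T T0.
  have hWs := supnorm_ub hw T0. have W0 := supnorm_ge0 hw T0.
  set W := supnorm w T in hWs W0 *.
  have hJ0 : forall i j s, ~~ E i j -> 0 <= s -> Jint (psi i j) s = 0.
    move=> i j s hE s0; rewrite (Jext (g := fun _ => 0)) ?Jcst ?mul0r //.
    by move=> x /andP[x0 _]; exact: hpsi0.
  have hmu' : forall i j s, 0 <= s ->
      mu i j * Jint (psi i j) s = nu i * Jint (psi i j) s.
    move=> i j s s0; case hE: (E i j).
      rewrite /nu; case: existsP => [_|hn]; first by rewrite hmuI.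
      by exfalso; apply: hn; exists j.
    by rewrite hJ0 ?hE // !mulr0.
  pose Psi i s := \sum_(j < J) psi i j s.
  have hPsi : forall i, meas_locbdd (Psi i) by move=> i; apply: ml_sum.
  pose Z s := \sum_(j < J) z j s.
  have hZ : meas_locbdd Z by apply: ml_sum.
  have E1 : forall i s, 0 <= s -> Psi i s + nu i * Jint (Psi i) s = w i s - y i s.
    move=> i s s0.
    have -> : w i s - y i s = w i s - Top (theta i) (y i) s by rewrite /Top hth mul0r addr0.
    rewrite -h1 // /Top big_split /=.
    under [X in _ = _ + X]eq_bigr => j _ do rewrite hmu' //.
    by rewrite -mulr_sumr -Jsum.
  have E2 : forall s, 0 <= s -> \sum_i Psi i s = - Z s.
    move=> s s0; rewrite /Psi exchange_big /= /Z -sumrN.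
    by apply: eq_bigr => j _; rewrite h2.
  have key : forall s, 0 <= s -> \sum_i y i s - Z s =
      \sum_i w i s - \sum_i nu i * Jint (Psi i) s.
    move=> s s0.
    have e1 : \sum_i (Psi i s + nu i * Jint (Psi i) s) = \sum_i (w i s - y i s).
      by apply: eq_bigr => i _; rewrite E1.
    move: e1; rewrite big_split /= E2 // sumrB => e1.
    lra.
  have Ub : forall i t0, 0 <= t0 <= T -> Jint (Psi i) t0 <= t0 * W.
    move=> i; have [L hL] := proj2 (hPsi i) T T0.
    apply: (compar W0 T0 (hPsi i) hL) => s /andP[s0 sT] hu.
    have := E1 i s s0.
    have wW := hWs s (introT andP (conj s0 sT)).
    have wi : w i s <= W.
      apply: le_trans wW; apply: le_trans (ler_norm _) _.
      rewrite (bigD1 i) //= lerDl; exact: sumr_ge0.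
    have := hy0 i s s0.
    have := mulr_ge0 (nu0 i) hu.
    lra.
  have Zb : forall s, 0 <= s <= T -> Z s <= W + N * (T * W).
    move=> s /andP[s0 sT].
    have hTW : 0 <= T * W by apply: mulr_ge0.
    have NTW : 0 <= N * (T * W) by apply: mulr_ge0.
    have ws := sum_w_ge w s. have wW := hWs s (introT andP (conj s0 sT)).
    have hnu : \sum_i nu i * Jint (Psi i) s <= N * (T * W).
      rewrite /N mulr_suml; apply: ler_sum => i _; apply: ler_wpM2l => //.
      apply: le_trans (Ub i s _) _; first by rewrite s0 sT.
      by apply: ler_wpM2r.
    have := key s s0.
    move: (min0 (hmin s s0)); rewrite -/(Z s) => -[->|->].
      lra.
    by move=> _; apply: addr_ge0.
  have sumU : - ((W + N * (T * W)) * T) <= \sum_i Jint (Psi i) T.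
    rewrite -Jsum // (Jext (g := fun x => - Z x)); last first.
      by move=> x /andP[x0 _]; rewrite E2.
    rewrite JN // lerN2 -Jcst //; apply: Jle => //; first exact: ml_cst.
  pose B := (W + N * (T * W)) * T + I%:R * (T * W) + T * W.
  have hTW : 0 <= T * W by apply: mulr_ge0.
  have UB : forall i, `|Jint (Psi i) T| <= B.
    move=> i; rewrite ler_norml; apply/andP; split.
      move: sumU; rewrite (bigD1 i) //=.
      have : \sum_(k | k != i) Jint (Psi k) T <= I%:R * (T * W).
        apply: le_trans (_ : \sum_(k | k != i) (T * W) <= _).
          apply: ler_sum => k _; apply: Ub; by rewrite T0 lexx.
        have -> : I%:R * (T * W) = \sum_(k < I) (T * W) by rewrite sumr_const card_ord mulr_natl.
        by rewrite [X in _ <= X](bigD1 i) //= lerDr.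
      rewrite /B; lra.
    have := Ub i T (introT andP (conj T0 (lexx T))).
    have : 0 <= (W + N * (T * W)) * T by apply: mulr_ge0 => //; apply: addr_ge0 => //; apply: mulr_ge0.
    have : 0 <= I%:R * (T * W) by apply: mulr_ge0.
    rewrite /B; lra.
  rewrite -/W.
  have -> : \sum_i `|y i T| + \sum_j `|z j T| = `|\sum_i w i T - \sum_i nu i * Jint (Psi i) T|.
    rewrite (eq_bigr (fun i => y i T)); last by move=> i _; rewrite ger0_norm // hy0.
    rewrite [X in _ + X](eq_bigr (fun j => z j T)); last by move=> j _; rewrite ger0_norm // hz0.
    apply: minsum; [apply: sumr_ge0 => i _; exact: hy0 | apply: sumr_ge0 => j _; exact: hz0 | exact: hmin | exact: key].
  apply: finish => //.
    rewrite /C; apply: addr_ge0; last exact: exprn_ge0.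
    by apply: addr_ge0 => //; apply: mulr_ge0 => //; apply: addr_ge0.
  have hnu2 : `|\sum_i nu i * Jint (Psi i) T| <= N * B.
    apply: le_trans (ler_norm_sum _ _ _) _.
    rewrite /N mulr_suml; apply: ler_sum => i _; rewrite normrM (ger0_norm (nu0 i)).
    by apply: ler_wpM2l.
  have hw1 := sum_w_ge w T. have hw2 := sum_w_le w T.
  have wW := hWs T (introT andP (conj T0 (lexx T))).
  apply: le_trans (ler_normB _ _) _.
  have : `|\sum_i w i T| <= W by rewrite ler_norml; lra.
  move: hnu2; rewrite /B /C.
  have hI : 0 <= I%:R :> R by [].
  move=> hnu2 hwT.
  have : N * ((W + N * (T * W)) * T + I%:R * (T * W) + T * W) <=
    (N * (2 + I%:R) + N ^+ 2) * (1 + T) ^+ 2 * W.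
    have hP1 : T <= (1 + T) ^+ 2 by rewrite expr2; nra.
    have hP2 : T ^+ 2 <= (1 + T) ^+ 2 by rewrite !expr2; nra.
    have -> : N * ((W + N * (T * W)) * T + I%:R * (T * W) + T * W) =
      (N * (2 + I%:R)) * (T * W) + N ^+ 2 * (T ^+ 2 * W) by ring.
    have a0 : 0 <= N * (2 + I%:R) by apply: mulr_ge0 => //; apply: addr_ge0.
    have b0 : 0 <= N ^+ 2 by apply: exprn_ge0.
    have q1 : T * W <= (1 + T) ^+ 2 * W by apply: ler_wpM2r.
    have q2 : T ^+ 2 * W <= (1 + T) ^+ 2 * W by apply: ler_wpM2r.
    have r1 := ler_wpM2l a0 q1. have r2 := ler_wpM2l b0 q2.
    have -> : (N * (2 + I%:R) + N ^+ 2) * (1 + T) ^+ 2 * W =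
      N * (2 + I%:R) * ((1 + T) ^+ 2 * W) + N ^+ 2 * ((1 + T) ^+ 2 * W) by ring.
    exact: lerD.
  have : W <= (1 + T) ^+ 2 * W.
    by apply: ler_peMl => //; rewrite expr2; nra.
  lra.
Qed.
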